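(* Assume the setting below. Fix $\boldsymbol\delta\in\mathbb R^n$ and $b\in\mathbb R$. Define $\tilde{\boldsymbol Y}^{\texttt{mp}}_{\boldsymbol Z,\boldsymbol\delta,b}(0)$ and $\tilde{\boldsymbol Y}^{\texttt{mn}}_{\boldsymbol Z,\boldsymbol\delta,b}(0)$ in $\overline{\mathbb R}^n$ by $$\tilde Y^{\texttt{mp}}_{\boldsymbol Z,\boldsymbol\delta,b,i}(0)=\begin{cases}\min\{Y_i-\delta_i,b\},& Z_i=1,M_i=1,\\ b,& Z_i=1,M_i=0,\\ Y_i,& Z_i=0,M_i=1,\\ b,& Z_i=0,M_i=0,\end{cases}\qquad \tilde Y^{\texttt{mn}}_{\boldsymbol Z,\boldsymbol\delta,b,i}(0)=\begin{cases}Y_i-\delta_i,& Z_i=1,M_i=1,\\ -\infty,& Z_i=1,M_i=0,\\ Y_i,& Z_i=0,M_i=1,\\ b,& Z_i=0,M_i=0.\end{cases}$$ (a) If $M_i(1)\ge M_i(0)$ for all $1\le i\le n$, then $\tilde p^{\texttt{mp}}_{\boldsymbol Z,\boldsymbol\delta,b}:=G_{\mathrm R,\phi}\big(t_{\mathrm R,\phi}(\boldsymbol Z,\tilde{\boldsymbol Y}^{\texttt{mp}}_{\boldsymbol Z,\boldsymbol\delta,b}(0))\big)$ is a valid p-value for $H_{\boldsymbol\delta}:\boldsymbol\tau=\boldsymbol\delta$. (b) If $M_i(1)\le M_i(0)$ for all $1\le i\le n$, then $\tilde p^{\texttt{mn}}_{\boldsymbol Z,\boldsymbol\delta,b}:=G_{\mathrm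 R,\phi}\big(t_{\mathrm R,\phi}(\boldsymbol Z,\tilde{\boldsymbol Y}^{\texttt{mn}}_{\boldsymbol Z,\boldsymbol\delta,b}(0))\big)$ is a valid p-value for $H_{\boldsymbol\delta}$. Here valid means: if $H_{\boldsymbol\delta}$ holds, $\mathbb P(p\le\alpha)\le\alpha$ for all $\alpha\in(0,1)$.
   Context: There are $n$ units. Unit $i$ has fixed potential outcomes $Y_i^\star(0),Y_i^\star(1)\in\mathbb R$ and fixed potential missingness indicators $M_i(0),M_i(1)\in\{0,1\}$; $\tau_i=Y_i^\star(1)-Y_i^\star(0)$, $\boldsymbol\tau=(\tau_1,\dots,\tau_n)^\intercal$. The assignment $\boldsymbol Z\in\{0,1\}^n$ is drawn from a completely randomized experiment (CRE): for fixed positive integers $n_1,n_0$, $n_1+n_0=n$, $\boldsymbol Z$ is uniform over vectors in $\{0,1\}^n$ with exactly $n_1$ ones, independently of all potential outcomes and missingness indicators; probabilities are over $\boldsymbol Z$. Observed missingness $M_i=Z_iM_i(1)+(1-Z_i)M_i(0)$; the realized outcome $Z_iY_i^\star(1)+(1-Z_i)Y_i^\star(0)$ is observed, and denoted $Y_i$, only when $M_i=1$. Test statistics: $\overline{\mathbb R}=\mathbb R\cup\{\pm\infty\}$; $\psi_{i,j}(y,y')=\mathbf 1\{y>y'\}+\mathbf 1\{y=y'\}\mathbf 1\{i\ge j\}$ for $y,y'\in\overline{\mathbb R}$; $\mathrm{rank}_i(\boldsymbol y)=\sum_{j=1}^n\psi_{i,j}(y_i,y_j)$. $\phi$ is a fixed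 nondecreasing real function on the nonnegative integers. $t_{\mathrm R,\phi}(\boldsymbol z,\boldsymbol y)$ is either $\sum_i z_i\phi(\mathrm{rank}_i(\boldsymbol y))$ or $\sum_i z_i\phi\big(\sum_j(1-z_j)\psi_{i,j}(y_i,y_j)\big)$; the result holds for either. $G_{\mathrm R,\phi}(c)=\mathbb P(t_{\mathrm R,\phi}(\boldsymbol A,\boldsymbol y_0)\ge c)$ with $\boldsymbol A$ from the CRE and $\boldsymbol y_0\in\mathbb R^n$ any fixed vector (independent of $\boldsymbol y_0$). *)

(* Defs.v *)
From HB Require Import structures.
From mathcomp Require Import all_boot all_order all_algebra.
From mathcomp Require Import reals constructive_ereal.
Unset Printing Implicit Defensive.
Import Order.TTheory GRing.Theory Num.Theory.
Local Open Scope ring_scope.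

Section Defs.
Variable R : realType.

Definition psi (n : nat) (i j : 'I_n) (y y' : \bar R) : nat :=
  ((y' < y)%E : nat) + ((y == y') && (j <= i)%N : nat).

Definition rank (n : nat) (y : 'I_n -> \bar R) (i : 'I_n) : nat :=
  (\sum_(j < n) psi n i j (y i) (y j))%N.

Definition t_R (n : nat) (phi : nat -> R) (form : bool)
    (z : {ffun 'I_n -> bool}) (y : 'I_n -> \bar R) : R :=
  if form then \sum_(i < n) (z i)%:R * phi (rank n y i)
  else \sum_(i < n) (z i)%:R *
         phi (\sum_(j < n) ((~~ z j : nat) * psi n i j (y i) (y j)))%N.

(* Support of the completely randomized experiment: exactly n1 treated units *)
Definition CRE (n n1 : nat) : {set {ffun 'I_n -> bool}} :=
  [set z : {ffun 'I_n -> bool} | #|[pred i | z i]| == n1].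

Definition prob (n n1 : nat) (E : pred {ffun 'I_n -> bool}) : R :=
  #|[set z in CRE n n1 | E z]|%:R / #|CRE n n1|%:R.

Definition G (n n1 : nat) (phi : nat -> R) (form : bool) (y0 : 'I_n -> R)
    (c : R) : R :=
  prob n n1 (fun a => c <= t_R n phi form a (fun i => (y0 i)%:E)).

(* Observed missingness indicator M_i (true = outcome observed) *)
Definition Mobs (n : nat) (M1 M0 : 'I_n -> bool) (z : {ffun 'I_n -> bool})
    (i : 'I_n) : bool := if z i then M1 i else M0 i.

(* Realized outcome Z_i Y_i(1) + (1 - Z_i) Y_i(0) (used only when M_i = 1) *)
Definition Yobs (n : nat) (Y1 Y0 : 'I_n -> R) (z : {ffun 'I_n -> bool})
    (i : 'I_n) : R := if z i then Y1 i else Y0 i.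

Definition Ymp (n : nat) (Y1 Y0 : 'I_n -> R) (M1 M0 : 'I_n -> bool)
    (z : {ffun 'I_n -> bool}) (delta : 'I_n -> R) (b : R) (i : 'I_n) : \bar R :=
  if z i then
    (if Mobs n M1 M0 z i then (Num.min (Yobs n Y1 Y0 z i - delta i) b)%:E else b%:E)
  else
    (if Mobs n M1 M0 z i then (Yobs n Y1 Y0 z i)%:E else b%:E).

Definition Ymn (n : nat) (Y1 Y0 : 'I_n -> R) (M1 M0 : 'I_n -> bool)
    (z : {ffun 'I_n -> bool}) (delta : 'I_n -> R) (b : R) (i : 'I_n) : \bar R :=
  if z i then
    (if Mobs n M1 M0 z i then (Yobs n Y1 Y0 z i - delta i)%:E else -oo%E)
  else
    (if Mobs n M1 M0 z i then (Yobs n Y1 Y0 z i)%:E else b%:E).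

End Defs.

(* Main.v *)
Require Import Defs.
From HB Require Import structures.
From mathcomp Require Import all_boot all_order all_algebra.
From mathcomp Require Import reals constructive_ereal zify.
Import Order.TTheory GRing.Theory Num.Theory.
Local Open Scope ring_scope.

Section Aux.
Variable R : realType.
Variable n : nat.
Implicit Types (y : 'I_n -> \bar R).

Definition lexle y (j i : 'I_n) : bool :=
  ((y j < y i)%E || ((y i == y j) && (j <= i)%N)).

Lemma psiE y i j : psi R n i j (y i) (y j) = lexle y j i.
Proof.
rewrite /psi /lexle; case: ltgtP => //= h.
Qed.

Lemma lexle_refl y i : lexle y i i.
Proof. by rewrite /lexle eqxx leqnn orbT. Qed.

Lemma lexle_total y i j : lexle y j i || lexle y i j.
Proof.
rewrite /lexle; case: (ltgtP (y j) (y i)) => //= h.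
by rewrite leq_total.
Qed.

Lemma lexle_anti y i j : lexle y j i -> lexle y i j -> i = j.
Proof.
rewrite /lexle; case: (ltgtP (y j) (y i)) => //= h.
move=> h1 h2; apply/val_inj/eqP; by rewrite eqn_leq h1 h2.
Qed.

Lemma lexle_trans {y i j k} : lexle y k j -> lexle y j i -> lexle y k i.
Proof.
rewrite /lexle => /orP[h1|/andP[/eqP e1 h1]] /orP[h2|/andP[/eqP e2 h2]].
- by rewrite (lt_trans h1 h2).
- by rewrite e2 h1.
- by rewrite -e1 h2.
- by rewrite e2 e1 eqxx (leq_trans h1 h2) orbT.
Qed.

Lemma lexle_mono {y y' i j} :
  (y i <= y' i)%E -> (y' j <= y j)%E -> lexle y j i -> lexle y' j i.
Proof.
rewrite /lexle => hi hj /orP[h|/andP[/eqP e h]].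
- by rewrite (le_lt_trans hj (lt_le_trans h hi)).
- have : (y' j <= y' i)%E by rewrite (le_trans hj) // -e.
  by rewrite le_eqVlt => /orP[/eqP ->|->//]; rewrite eqxx h orbT.
Qed.

Definition rk y i : nat := (\sum_(j < n) lexle y j i)%N.

Lemma rankE y i : rank R n y i = rk y i.
Proof. by apply: eq_bigr => j _; rewrite psiE. Qed.

Lemma rk_le y i j : lexle y j i -> (rk y j <= rk y i)%N.
Proof.
move=> h; apply: leq_sum => k _.
by case: (boolP (lexle y k j)) => // hk; rewrite (lexle_trans hk h).
Qed.

Lemma rk_lt y i j : ~~ lexle y j i -> (rk y i < rk y j)%N.
Proof.
move=> h; have hij : lexle y i j by move: (lexle_total y i j); rewrite (negbTE h).
rewrite /rk [X in (X < _)%N](bigD1 j) //= [X in (_ < X)%N](bigD1 j) //= (negbTE h) lexle_refl add0n add1n ltnS.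
apply: leq_sum => k _.
by case: (boolP (lexle y k i)) => // hk; rewrite (lexle_trans hk hij).
Qed.

Lemma rk_leE y i j : (rk y j <= rk y i)%N = lexle y j i.
Proof.
case: (boolP (lexle y j i)) => h; first by rewrite rk_le.
by apply/negbTE; rewrite -ltnNge rk_lt.
Qed.

Lemma rk_inj y : injective (rk y).
Proof.
move=> i j e; apply: (@lexle_anti y); rewrite -rk_leE e //.
Qed.

Lemma rk_gt0 y i : (0 < rk y i)%N.
Proof. by rewrite /rk (bigD1 i) //= lexle_refl. Qed.

Lemma rk_le_n y i : (rk y i <= n)%N.
Proof.
rewrite -[X in (_ <= X)%N]card_ord -sum1_card.
by apply: leq_sum => j _; case: lexle.
Qed.

Lemma rk_ltn y i : ((rk y i).-1 < n)%N.
Proof. by rewrite prednK ?rk_gt0 ?rk_le_n. Qed.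

Definition pos y i : 'I_n := Ordinal (rk_ltn y i).

Lemma posE y i : (pos y i).+1 = rk y i.
Proof. by rewrite /= prednK ?rk_gt0. Qed.

Lemma pos_inj y : injective (pos y).
Proof. by move=> i j /(congr1 (fun k : 'I_n => k.+1)); rewrite !posE => /rk_inj. Qed.

Lemma lexle_pos y i j : lexle y j i = (pos y j <= pos y i)%N.
Proof. by rewrite -rk_leE -!posE ltnS. Qed.


Variable phi : nat -> R.
Variable form : bool.

Definition S (b : {ffun 'I_n -> bool}) : R :=
  if form then \sum_(k < n) (b k)%:R * phi k.+1
  else \sum_(k < n) (b k)%:R * phi (\sum_(l < n) ((~~ b l : nat) * (l <= k)%N))%N.

Definition Phi y (a : {ffun 'I_n -> bool}) : {ffun 'I_n -> bool} :=
  [ffun k => a (invF (@pos_inj y) k)].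

Lemma tR_S y a : t_R R n phi form a y = S (Phi y a).
Proof.
set g := invF (@pos_inj y).
have gK : cancel g (pos y) := f_invF (@pos_inj y).
have ginj : injective g by apply: (can_inj gK).
rewrite /t_R /S; case: form.
- rewrite (reindex_inj ginj); apply: eq_bigr => k _.
  by rewrite /Phi ffunE rankE -posE gK.
- rewrite (reindex_inj ginj); apply: eq_bigr => k _.
  rewrite /Phi ffunE; congr (_ * phi _).
  rewrite (reindex_inj ginj); apply: eq_bigr => l _.
  by rewrite ffunE psiE lexle_pos !gK.
Qed.

Lemma card_predE (P : pred 'I_n) : #|[pred i | P i]| = (\sum_(i < n) (P i : nat))%N.
Proof. by rewrite -sum1_card big_mkcond /=; apply: eq_bigr => i _; rewrite inE; case: (P i). Qed.

Lemma Phi_CRE n1 y a : (#|[pred i | Phi y a i]| == n1) = (#|[pred i | a i]| == n1).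
Proof.
rewrite !card_predE.
set g := invF (@pos_inj y).
have gK : cancel g (pos y) := f_invF (@pos_inj y).
have ginj : injective g by apply: (can_inj gK).
rewrite [X in _ = (X == _)](reindex_inj ginj) /=.
congr (_ == _); apply: eq_bigr => k _; by rewrite /Phi ffunE.
Qed.

Lemma Phi_inj y : injective (Phi y).
Proof.
move=> a a' e; apply/ffunP => i.
have := congr1 (fun f : {ffun 'I_n -> bool} => f (pos y i)) e.
by rewrite /Phi !ffunE invF_f.
Qed.

Lemma count_inv n1 y (P : pred R) :
  #|[set a in CRE n n1 | P (t_R R n phi form a y)]| = #|[set b in CRE n n1 | P (S b)]|.
Proof.
symmetry; rewrite -(card_preimset _ (@Phi_inj y)); apply: eq_card => a.
by rewrite !inE Phi_CRE tR_S.
Qed.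


Definition cnt y (z : {ffun 'I_n -> bool}) m : nat := (\sum_(i < n) (z i && (m < rk y i)%N))%N.

Lemma sum_rk_gt y m : (\sum_(i < n) (m < rk y i)%N)%N = (\sum_(k < n) (m < k.+1)%N)%N.
Proof.
rewrite [RHS](reindex_inj (@pos_inj y)); apply: eq_bigr => i _; by rewrite posE.
Qed.

Lemma cnt_mono y y' (z : {ffun 'I_n -> bool}) (m : nat) :
  (forall i, z i -> (y i <= y' i)%E) -> (forall i, ~~ z i -> (y' i <= y i)%E) ->
  (cnt y z m <= cnt y' z m)%N.
Proof.
move=> hT hC.
have split_ yy : (\sum_(i < n) (m < rk yy i)%N)%N =
   (cnt yy z m + \sum_(i < n) (~~ z i && (m < rk yy i)%N))%N.
  rewrite /cnt -big_split /=; apply: eq_bigr => i _; by case: (z i); case: (m < rk yy i)%N.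
have hAB := sum_rk_gt y m; rewrite -(sum_rk_gt y' m) !split_ in hAB.
case: (pickP (fun i => z i && (m < rk y i)%N && ~~ (m < rk y' i)%N)) => [t /andP[/andP[zt ht] ht']|hn].
- have hc : (\sum_(i < n) (~~ z i && (m < rk y' i)%N) <= \sum_(i < n) (~~ z i && (m < rk y i)%N))%N.
    apply: leq_sum => c _.
    case: (boolP (z c)) => //= zc.
    case: (boolP (m < rk y' c)%N) => //= hc'.
    case: (boolP (m < rk y c)%N) => //= hc.
    exfalso.
    have h1 : ~~ lexle y t c.
      rewrite -rk_leE -ltnNge. by apply: (leq_ltn_trans _ ht); rewrite leqNgt.
    have h2 : lexle y c t by move: (lexle_total y t c); rewrite (negbTE h1) orbF.
    have h3 : lexle y' c t by apply: lexle_mono h2; [exact: hT | exact: hC].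
    have := @rk_le y' t c h3; rewrite leqNgt => /negP; apply.
    by apply: (leq_ltn_trans _ hc'); rewrite leqNgt.
  lia.
- apply: leq_sum => i _.
  move: (hn i) => /=.
  by case: (z i); case: (m < rk y i)%N; case: (m < rk y' i)%N.
Qed.


Lemma phi_abel r : (r <= n)%N ->
  phi r = phi 0 + \sum_(m < n) (m < r)%N%:R * (phi m.+1 - phi m).
Proof.
move=> hr.
have -> : \sum_(m < n) (m < r)%N%:R * (phi m.+1 - phi m) =
          \sum_(0 <= m < r) (phi m.+1 - phi m).
  rewrite (big_nat_widen _ _ _ _ _ hr) /=. rewrite [RHS]big_mkcond /= big_mkord.
  by apply: eq_bigr => m _; case: (m < r)%N; rewrite ?mul1r ?mul0r.
by rewrite telescope_sumr // addrC subrK.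
Qed.

Lemma tR_true_dec y (z : {ffun 'I_n -> bool}) :
  \sum_(i < n) (z i)%:R * phi (rk y i) =
  \sum_(i < n) (z i)%:R * phi 0 + \sum_(m < n) (cnt y z m)%:R * (phi m.+1 - phi m).
Proof.
under eq_bigr => i _ do rewrite (@phi_abel _ (rk_le_n y i)) mulrDr.
rewrite big_split /=; congr (_ + _).
under eq_bigr => i _ do rewrite mulr_sumr.
rewrite exchange_big /=; apply: eq_bigr => m _.
rewrite /cnt natr_sum mulr_suml; apply: eq_bigr => i _.
by rewrite mulrA -natrM; case: (z i); case: (m < rk y i)%N.
Qed.

Lemma tR_mono y y' (z : {ffun 'I_n -> bool}) :
  {homo phi : x y / (x <= y)%N >-> x <= y} ->
  (forall i, z i -> (y i <= y' i)%E) -> (forall i, ~~ z i -> (y' i <= y i)%E) ->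
  t_R R n phi form z y <= t_R R n phi form z y'.
Proof.
move=> hphi hT hC; rewrite /t_R; case: form.
- under eq_bigr => i _ do rewrite rankE.
  under [X in _ <= X]eq_bigr => i _ do rewrite rankE.
  rewrite !tR_true_dec lerD2l; apply: ler_sum => m _.
  apply: ler_wpM2r; first by rewrite subr_ge0 hphi.
  by rewrite ler_nat cnt_mono.
- apply: ler_sum => i _.
  case: (boolP (z i)) => zi; last by rewrite !mul0r.
  rewrite !mul1r; apply: hphi; apply: leq_sum => j _.
  case: (boolP (z j)) => //= zj; rewrite !mul1n !psiE.
  by case: (boolP (lexle y j i)) => // h; rewrite (lexle_mono (hT _ zi) (hC _ zj) h).
Qed.

End Aux.

Section Main.
Variable R : realType.
Variables (n n1 : nat) (phi : nat -> R) (form : bool).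

Lemma prob_mono (E E' : pred {ffun 'I_n -> bool}) :
  (forall z, z \in CRE n n1 -> E z -> E' z) -> prob R n n1 E <= prob R n n1 E'.
Proof.
move=> h; rewrite /prob; apply: ler_wpM2r; first by rewrite invr_ge0.
rewrite ler_nat.
apply: subset_leq_card; apply/subsetP => z; rewrite !inE => /andP[zc ez].
by rewrite zc h // inE.
Qed.

Lemma prob_ge0 (E : pred {ffun 'I_n -> bool}) : 0 <= prob R n n1 E.
Proof. by rewrite /prob mulr_ge0 ?invr_ge0. Qed.

Lemma G_inv y0 y c :
  G R n n1 phi form y0 c = prob R n n1 (fun a => c <= t_R R n phi form a y).
Proof.
rewrite /G /prob; congr (_%:R / _).
have h1 := @count_inv R n phi form n1 (fun i => (y0 i)%:E) (fun x => c <= x).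
have h2 := @count_inv R n phi form n1 y (fun x => c <= x).
by rewrite /= in h1 h2; rewrite h1 h2.
Qed.

Lemma pvalue y (alpha : R) : 0 <= alpha ->
  prob R n n1 (fun z => prob R n n1 (fun a => t_R R n phi form z y <= t_R R n phi form a y)
                         <= alpha) <= alpha.
Proof.
move=> ha.
set T := fun z => t_R R n phi form z y.
set E := [set z in CRE n n1 | prob R n n1 (fun a => T z <= T a) <= alpha].
have -> : prob R n n1 (fun z => prob R n n1 (fun a => T z <= T a) <= alpha) =
          #|E|%:R / #|CRE n n1|%:R by [].
case: (set_0Vmem E) => [->|[z0 z0E]].
  by rewrite cards0 mul0r.
case: (@arg_minP _ _ _ z0 (fun z => z \in E) T z0E) => zm zmE zmin.
apply: le_trans (_ : prob R n n1 (fun a => T zm <= T a) <= alpha); last first.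
  by move: zmE; rewrite inE => /andP[].
rewrite /prob; apply: ler_wpM2r; first by rewrite invr_ge0.
rewrite ler_nat.
apply: subset_leq_card; apply/subsetP => z zE.
have := zmin z zE; move: zE; rewrite !inE => /andP[-> _] /= h.
exact: h.
Qed.

End Main.

Theorem theorem3 (R : realType) (n n1 n0 : nat)
    (Y1 Y0 : 'I_n -> R) (M1 M0 : 'I_n -> bool)
    (phi : nat -> R) (form : bool) (y0 : 'I_n -> R)
    (delta : 'I_n -> R) (b : R) :
  (0 < n1)%N -> (0 < n0)%N -> (n1 + n0)%N = n ->
  {homo phi : x y / (x <= y)%N >-> x <= y} ->
  (forall i, Y1 i - Y0 i = delta i) ->
  ((forall i, (M0 i <= M1 i)%N) ->
     forall alpha : R, 0 < alpha < 1 ->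
       prob R n n1 (fun z => G R n n1 phi form y0
                      (t_R R n phi form z (Ymp R n Y1 Y0 M1 M0 z delta b)) <= alpha)
       <= alpha)
  /\
  ((forall i, (M1 i <= M0 i)%N) ->
     forall alpha : R, 0 < alpha < 1 ->
       prob R n n1 (fun z => G R n n1 phi form y0
                      (t_R R n phi form z (Ymn R n Y1 Y0 M1 M0 z delta b)) <= alpha)
       <= alpha).
Proof.
move=> _ _ _ hphi hdelta.
have e i : Y1 i - delta i = Y0 i by rewrite -hdelta opprB addrC subrK.
have key : forall (Yt : {ffun 'I_n -> bool} -> 'I_n -> \bar R) (ys : 'I_n -> \bar R) (alpha : R),
    0 <= alpha ->
    (forall (z : {ffun 'I_n -> bool}) i, z i -> (Yt z i <= ys i)%E) ->
    (forall (z : {ffun 'I_n -> bool}) i, ~~ z i -> (ys i <= Yt z i)%E) ->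
    prob R n n1 (fun z => G R n n1 phi form y0 (t_R R n phi form z (Yt z)) <= alpha) <= alpha.
  move=> Yt ys alpha ha hT hC.
  apply: (le_trans _ (@pvalue R n n1 phi form ys alpha ha)).
  apply: prob_mono => z _ h.
  rewrite -(@G_inv R n n1 phi form y0 ys); apply: (le_trans _ h).
  rewrite !(@G_inv R n n1 phi form y0 ys); apply: prob_mono => a _ /= h'.
  apply: (le_trans _ h'); apply: tR_mono => //.
  - exact: hT.
  - exact: hC.
split => hM alpha /andP[ha0 _].
- apply: (key _ (fun i => (if M0 i then Y0 i else if M1 i then Num.min (Y0 i) b else b)%:E)
     _ (ltW ha0)) => z i; rewrite /Ymp /Mobs /Yobs.
  + move=> ->; rewrite e; move: (hM i).
    by case: (M0 i); case: (M1 i) => //= _; rewrite lee_fin ?ge_min ?lexx ?orbT.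
  + move=> /negbTE ->; move: (hM i).
    by case: (M0 i); case: (M1 i) => //= _; rewrite lee_fin ?ge_min ?lexx ?orbT.
- apply: (key _ (fun i => (if M0 i then Y0 i else b)%:E) _ (ltW ha0)) => z i;
    rewrite /Ymn /Mobs /Yobs.
  + move=> ->; rewrite e; move: (hM i).
    by case: (M0 i); case: (M1 i) => //= _; rewrite ?leNye ?lexx.
  + move=> /negbTE ->.
    by case: (M0 i); rewrite lexx.
Qed.
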